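(* For any smooth complex-valued potential $V(t,x)$, $\dim\mathfrak g^{\mathrm{ess}}_V\le7$.
   Context: $\mathfrak g_V$ denotes the maximal Lie invariance algebra of the equation $i\psi_t+\psi_{xx}+V(t,x)\psi=0$ ($\psi$ complex-valued of real $t,x$; vector fields act on $(t,x,\psi,\psi^* )$ with $\psi^*$ an additional dependent variable), considered locally. With $M=i\psi\partial_\psi-i\psi^*\partial_{\psi^*}$, $I=\psi\partial_\psi+\psi^*\partial_{\psi^*}$, $D(\tau)=\tau\partial_t+\frac12\tau_tx\partial_x+\frac18\tau_{tt}x^2M$, $G(\chi)=\chi\partial_x+\frac12\chi_txM$, the essential Lie invariance algebra is $\mathfrak g^{\mathrm{ess}}_V:=\mathfrak g_V\cap\langle D(\tau),G(\chi),\sigma(t)M,\rho(t)I\rangle$, the span being over all smooth real functions $\tau,\chi,\sigma,\rho$ of $t$. *)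

(* Defs.v *)
From Stdlib Require Import Reals List.
From Coquelicot Require Import Coquelicot.

Notation CC := Complex.C.

Definition dtR (f : R -> R -> R) : R -> R -> R :=
  fun t x => Derive (fun s => f s x) t.
Definition dxR (f : R -> R -> R) : R -> R -> R :=
  fun t x => Derive (fun y => f t y) x.
Definition dtC (f : R -> R -> CC) : R -> R -> CC :=
  fun t x => (dtR (fun a b => Re (f a b)) t x, dtR (fun a b => Im (f a b)) t x).
Definition dxC (f : R -> R -> CC) : R -> R -> CC :=
  fun t x => (dxR (fun a b => Re (f a b)) t x, dxR (fun a b => Im (f a b)) t x).

Definition smooth1 (f : R -> R) : Prop := forall (n : nat) (t : R), ex_derive_n f n t.

(* iterated partial derivative along a word of directions (true = t, false = x) *)
Fixpoint pd (w : list bool) (f : R -> R -> R) : R -> R -> R :=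
  match w with
  | nil => f
  | cons b w' => if b then dtR (pd w' f) else dxR (pd w' f)
  end.

Definition smooth2 (f : R -> R -> R) : Prop :=
  forall (w : list bool) (t x : R),
    ex_derive (fun s => pd w f s x) t /\ ex_derive (fun y => pd w f t y) x /\
    continuous (fun p : R * R => pd w f (fst p) (snd p)) (t, x).

Definition smooth2C (f : R -> R -> CC) : Prop :=
  smooth2 (fun t x => Re (f t x)) /\ smooth2 (fun t x => Im (f t x)).

(* ---------- vector fields ----------
   A vector field  Q = tau d_t + xi d_x + (Phi psi) d_psi + (Phic psic ) d_psic
   on the space (t,x,psi,psic), with coefficients depending on (t,x);
   all elements of the span <D(tau),G(chi),sigma M,rho I> are of this form. *)
Record VF := mkVF {
  vtau : R -> R -> R;
  vxi  : R -> R -> R;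
  vPhi : R -> R -> CC;
  vPhic : R -> R -> CC }.

Local Open Scope C_scope.

(* Second prolongation of Q (general prolongation formula, specialised to the
   coefficient form of VF), evaluated at the jet (p0,pt,px,ptx,pxx) of psi:
   eta = Phi p0, W = eta - tau pt - xi px,
   eta^t  = D_t W + tau psi_tt + xi psi_tx,
   eta^xx = D_x^2 W + tau psi_xxt + xi psi_xxx. *)
Definition eta_t (tau xi : R -> R -> R) (Phi : R -> R -> CC) (t x : R)
  (p0 pt px : CC) : CC :=
  dtC Phi t x * p0 + Phi t x * pt - RtoC (dtR tau t x) * pt - RtoC (dtR xi t x) * px.

Definition eta_xx (tau xi : R -> R -> R) (Phi : R -> R -> CC) (t x : R)
  (p0 pt px ptx pxx : CC) : CC :=
  dxC (dxC Phi) t x * p0 + RtoC 2 * dxC Phi t x * px + Phi t x * pxx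
  - RtoC (dxR (dxR tau) t x) * pt - RtoC 2 * RtoC (dxR tau t x) * ptx
  - RtoC (dxR (dxR xi) t x) * px - RtoC 2 * RtoC (dxR xi t x) * pxx.

(* Q belongs to the maximal Lie invariance algebra g_V of the system
     Delta  := i psi_t + psi_xx + V psi = 0,
     Deltac := -i psic_t + psic_xx + conj V psic = 0
   (psic treated as an additional dependent variable):
   infinitesimal invariance criterion  pr^(2) Q (Delta) = pr^(2) Q (Deltac) = 0
   on the solution manifold of the system in the second-order jet space. *)
Definition in_gV (V : R -> R -> CC) (Q : VF) : Prop :=
  forall (t x : R) (p0 pt px ptx pxx q0 qt qx qtx qxx : CC),
    Ci * pt + pxx + V t x * p0 = 0 ->
    - Ci * qt + qxx + Cconj (V t x) * q0 = 0 ->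
    Ci * eta_t (vtau Q) (vxi Q) (vPhi Q) t x p0 pt px
      + eta_xx (vtau Q) (vxi Q) (vPhi Q) t x p0 pt px ptx pxx
      + (RtoC (vtau Q t x) * dtC V t x + RtoC (vxi Q t x) * dxC V t x) * p0
      + V t x * (vPhi Q t x * p0) = 0
    /\
    - Ci * eta_t (vtau Q) (vxi Q) (vPhic Q) t x q0 qt qx
      + eta_xx (vtau Q) (vxi Q) (vPhic Q) t x q0 qt qx qtx qxx
      + (RtoC (vtau Q t x) * Cconj (dtC V t x) + RtoC (vxi Q t x) * Cconj (dxC V t x)) * q0
      + Cconj (V t x) * (vPhic Q t x * q0) = 0.

(* The vector field  D(tau) + G(chi) + sigma M + rho I, where
   D(tau) = tau d_t + 1/2 tau_t x d_x + 1/8 tau_tt x^2 M,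
   G(chi) = chi d_x + 1/2 chi_t x M,
   M = i psi d_psi - i psic d_psic,  I = psi d_psi + psic d_psic. *)
Definition essVF (tau chi sigma rho : R -> R) : VF :=
  let mcoef := fun t x =>
    (sigma t + / 8 * Derive_n tau 2 t * x ^ 2 + / 2 * Derive chi t * x)%R in
  mkVF (fun t x => tau t)
       (fun t x => (/ 2 * Derive tau t * x + chi t)%R)
       (fun t x => (rho t, mcoef t x))
       (fun t x => (rho t, - mcoef t x)%R).

Definition in_gess (V : R -> R -> CC) (tau chi sigma rho : R -> R) : Prop :=
  smooth1 tau /\ smooth1 chi /\ smooth1 sigma /\ smooth1 rho /\
  in_gV V (essVF tau chi sigma rho).

Definition lincomb_zero (n : nat) (c : nat -> R) (Q : nat -> VF) : Prop :=
  forall t x : R,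
    sum_f_R0 (fun k => c k * vtau (Q k) t x)%R (pred n) = 0%R /\
    sum_f_R0 (fun k => c k * vxi (Q k) t x)%R (pred n) = 0%R /\
    sum_f_R0 (fun k => c k * Re (vPhi (Q k) t x))%R (pred n) = 0%R /\
    sum_f_R0 (fun k => c k * Im (vPhi (Q k) t x))%R (pred n) = 0%R /\
    sum_f_R0 (fun k => c k * Re (vPhic (Q k) t x))%R (pred n) = 0%R /\
    sum_f_R0 (fun k => c k * Im (vPhic (Q k) t x))%R (pred n) = 0%R.

(* Main.v *)
Require Import Defs.
From Stdlib Require Import Reals.
From Coquelicot Require Import Coquelicot.
From Stdlib Require Import Lra Lia Classical Arith.
Open Scope R_scope.

Lemma sm_ex f n t : smooth1 f -> ex_derive (Derive_n f n) t.
Proof. intros H. exact (H (S n) t). Qed.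

Lemma A1eq (tau chi sigma : R -> R) (t x : R) : smooth1 tau -> smooth1 chi -> smooth1 sigma ->
  dtR (fun a b => sigma a + / 8 * Derive (fun x => Derive (fun x0 => tau x0) x) a * (b * (b * 1)) + / 2 * Derive chi a * b) t x
  = Derive sigma t + / 8 * Derive_n tau 3 t * (x * (x * 1)) + / 2 * Derive_n chi 2 t * x.
Proof.
  intros Ht Hc Hs. unfold dtR. apply is_derive_unique.
  pose proof (sm_ex sigma 0 t Hs) as D1.
  pose proof (sm_ex tau 2 t Ht) as D2.
  pose proof (sm_ex chi 1 t Hc) as D3.
  simpl in D1, D2, D3.
  auto_derive.
  - repeat split; auto.
  - simpl. rewrite !Rmult_1_l. reflexivity.
Qed.

Lemma A2eq (rho : R -> R) (t x : R) : dtR (fun a _ => rho a) t x = Derive rho t.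
Proof. reflexivity. Qed.

Lemma A3eq (tau chi sigma : R -> R) (t x : R) :
  dxR (fun a b => dxR (fun a0 b0 => sigma a0 + / 8 * Derive (fun x => Derive (fun x0 => tau x0) x) a0 * (b0 * (b0 * 1)) + / 2 * Derive chi a0 * b0) a b) t x
  = / 4 * Derive_n tau 2 t.
Proof.
  unfold dxR. 
  rewrite (Derive_ext _ (fun y => 2 * (/ 8 * Derive_n tau 2 t) * y + / 2 * Derive chi t)).
  - apply is_derive_unique. auto_derive; auto. simpl. field.
  - intros y. apply is_derive_unique. auto_derive; auto. simpl. field.
Qed.

Lemma A4eq (tau chi : R -> R) (t x : R) :
  dxR (fun t x => / 2 * Derive tau t * x + chi t) t x = / 2 * Derive tau t.
Proof. unfold dxR. apply is_derive_unique. auto_derive; auto. ring. Qed.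

Lemma A5eq (rho : R -> R) (t x : R) : dxR (fun a b => dxR (fun a0 _ => rho a0) a b) t x = 0.
Proof. unfold dxR. rewrite (Derive_ext _ (fun _ => 0)). apply Derive_const. intros; apply Derive_const. Qed.

Definition aR (V : R -> R -> CC) x t := Re (V t x).
Definition atR (V : R -> R -> CC) x t := dtR (fun a b => Re (V a b)) t x.
Definition axR (V : R -> R -> CC) x t := dxR (fun a b => Re (V a b)) t x.
Definition bI (V : R -> R -> CC) x t := Im (V t x).
Definition btI (V : R -> R -> CC) x t := dtR (fun a b => Im (V a b)) t x.
Definition bxI (V : R -> R -> CC) x t := dxR (fun a b => Im (V a b)) t x.

Lemma eqs V tau chi sigma rho (t x : R) :
  in_gess V tau chi sigma rho ->
  Derive sigma t + / 8 * Derive_n tau 3 t * (x * x) + / 2 * Derive_n chi 2 t * x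
   = Derive tau t * aR V x t + tau t * atR V x t + (/2 * Derive tau t * x + chi t) * axR V x t
  /\ Derive rho t = - (/ 4 * Derive_n tau 2 t + Derive tau t * bI V x t + tau t * btI V x t + (/2 * Derive tau t * x + chi t) * bxI V x t).
Proof.
  intros (Ht & Hc & Hs & Hr & HV).
  destruct (HV t x (1,0) (0,0) (0,0) (0,0) (Copp (V t x)) (0,0) (0,0) (0,0) (0,0) (0,0)) as [E _].
  { destruct (V t x) as [a b]. apply injective_projections; simpl; ring. }
  { destruct (V t x) as [a b]. apply injective_projections; simpl; ring. }
  unfold eta_t, eta_xx, essVF, dtC, dxC in E. simpl in E.
  generalize (f_equal fst E) (f_equal snd E). simpl.
  rewrite A1eq, A2eq, A3eq, A4eq, A5eq by assumption.
  unfold aR, atR, axR, bI, btI, bxI, Re, Im.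
  intros E1 E2.
  change (Derive (fun x0 => Derive (fun x1 => Derive (fun x2 => tau x2) x1) x0) t) with (Derive_n tau 3 t) in E1, E2 |- *.
  change (Derive (fun x0 => Derive (fun x1 => tau x1) x0) t) with (Derive_n tau 2 t) in E1, E2 |- *.
  change (Derive (fun x0 => Derive (fun x1 => chi x1) x0) t) with (Derive_n chi 2 t) in E1, E2 |- *.
  split; lra.
Qed.

Definition Yf (tau chi sigma rho : R -> R) (i : nat) : R -> R :=
  match i with 0 => tau | 1 => Derive tau | 2 => Derive_n tau 2 | 3 => chi
  | 4 => Derive chi | 5 => sigma | 6 => rho | _ => fun _ => 0 end.

Definition Rx V x t (y : nat -> R) :=
  y 1%nat * aR V x t + y 0%nat * atR V x t + (/2 * y 1%nat * x + y 3%nat) * axR V x t.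

Definition Fv V (i : nat) t (y : nat -> R) : R :=
  match i with
  | 0 => y 1%nat | 1 => y 2%nat
  | 2 => 4 * (Rx V 1 t y + Rx V (-1) t y - 2 * Rx V 0 t y)
  | 3 => y 4%nat
  | 4 => Rx V 1 t y - Rx V (-1) t y
  | 5 => Rx V 0 t y
  | 6 => - (/4 * y 2%nat + y 1%nat * bI V 0 t + y 0%nat * btI V 0 t + (/2 * y 1%nat * 0 + y 3%nat) * bxI V 0 t)
  | _ => 0 end.

Lemma ode_elem V tau chi sigma rho (i : nat) (t : R) :
  in_gess V tau chi sigma rho -> (i < 7)%nat ->
  is_derive (Yf tau chi sigma rho i) t (Fv V i t (fun j => Yf tau chi sigma rho j t)).
Proof.
  intros H Hi. pose proof H as (Ht & Hc & Hs & Hr & _).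
  destruct (eqs V tau chi sigma rho t 1 H) as [P1 _].
  destruct (eqs V tau chi sigma rho t (-1) H) as [M1 _].
  destruct (eqs V tau chi sigma rho t 0 H) as [Z1 Z2].
  unfold Rx.
  destruct i as [|[|[|[|[|[|[|i]]]]]]]; cbn [Fv]; unfold Rx; cbn [Yf].
  - exact (Derive_correct _ _ (sm_ex tau 0 t Ht)).
  - exact (Derive_correct _ _ (sm_ex tau 1 t Ht)).
  - replace (4 * _) with (Derive (Derive_n tau 2) t).
    exact (Derive_correct _ _ (sm_ex tau 2 t Ht)).
    change (Derive (Derive_n tau 2) t) with (Derive_n tau 3 t). lra.
  - exact (Derive_correct _ _ (sm_ex chi 0 t Hc)).
  - replace (_ - _) with (Derive (Derive chi) t).
    exact (Derive_correct _ _ (sm_ex chi 1 t Hc)).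
    change (Derive (Derive chi) t) with (Derive_n chi 2 t). lra.
  - replace (_ + _) with (Derive sigma t).
    exact (Derive_correct _ _ (sm_ex sigma 0 t Hs)). lra.
  - rewrite <- Z2.
    exact (Derive_correct _ _ (sm_ex rho 0 t Hr)).
  - exfalso. lia.
Qed.

Lemma mono_dec (g dg : R -> R) (a b : R) : a <= b ->
  (forall x, a <= x <= b -> is_derive g x (dg x) /\ dg x <= 0) -> g b <= g a.
Proof.
  intros Hab H.
  destruct (MVT_gen g a b dg) as [c [Hc E]].
  - intros x Hx. rewrite Rmin_left, Rmax_right in Hx by lra. apply H; lra.
  - intros x Hx. rewrite Rmin_left, Rmax_right in Hx by lra.
    assert (Hex : ex_derive g x) by (exists (dg x); apply H; lra).
    apply continuity_pt_filterlim. exact (ex_derive_continuous g x Hex).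
  - rewrite Rmin_left, Rmax_right in Hc by lra.
    destruct (H c Hc) as [_ Hd].
    assert (dg c * (b - a) <= 0). { apply Rmult_le_0_r; lra. } 
    lra.
Qed.

Lemma der_mult_R (f g : R -> R) x a b : is_derive f x a -> is_derive g x b ->
  is_derive (fun t => f t * g t) x (a * g x + f x * b).
Proof. intros Hf Hg. exact (is_derive_mult f g x a b Hf Hg Rmult_comm). Qed.

Lemma der_plus_R (f g : R -> R) x a b : is_derive f x a -> is_derive g x b ->
  is_derive (fun t => f t + g t) x (a + b).
Proof. intros Hf Hg. exact (is_derive_plus f g x a b Hf Hg). Qed.

Lemma der_exp L x : is_derive (fun t => exp (L * t)) x (exp (L * x) * L).
Proof. auto_derive; auto. ring. Qed.

Lemma gron_fwd (f df : R -> R) L u v : u <= v ->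
  (forall x, u <= x <= v -> is_derive f x (df x) /\ df x <= L * f x) ->
  0 <= f v -> f u = 0 -> f v = 0.
Proof.
  intros Huv H Hv Hu.
  assert (Hm : (fun x => f x * exp (-L * x)) v <= (fun x => f x * exp (-L * x)) u).
  { apply (mono_dec (fun x => f x * exp (-L * x)) (fun x => df x * exp (-L * x) + f x * (exp (-L * x) * -L)) u v); auto.
    intros x Hx. destruct (H x Hx) as [H1 H2]. split.
    - apply (der_mult_R f (fun t => exp (-L * t))); auto. apply (der_exp (-L)).
    - pose proof (exp_pos (-L * x)). nra. }
  simpl in Hm. rewrite Hu in Hm. pose proof (exp_pos (-L * v)). nra.
Qed.

Lemma gron_bwd (f df : R -> R) L u v : v <= u ->
  (forall x, v <= x <= u -> is_derive f x (df x) /\ - L * f x <= df x) ->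
  0 <= f v -> f u = 0 -> f v = 0.
Proof.
  intros Huv H Hv Hu.
  assert (Hm : (fun x => - (f x * exp (L * x))) u <= (fun x => - (f x * exp (L * x))) v).
  { apply (mono_dec (fun x => - (f x * exp (L * x))) (fun x => - (df x * exp (L * x) + f x * (exp (L * x) * L))) v u); auto.
    intros x Hx. destruct (H x Hx) as [H1 H2]. split.
    - apply (is_derive_opp (fun x => f x * exp (L * x))). apply (der_mult_R f (fun t => exp (L * t))); auto. apply (der_exp L).
    - pose proof (exp_pos (L * x)). nra. }
  simpl in Hm. rewrite Hu in Hm. pose proof (exp_pos (L * v)). nra.
Qed.

Definition S7 (z : nat -> R) := Rabs (z 0%nat) + Rabs (z 1%nat) + Rabs (z 2%nat) + Rabs (z 3%nat)
  + Rabs (z 4%nat) + Rabs (z 5%nat) + Rabs (z 6%nat).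
Definition Q7 (z : nat -> R) := z 0%nat * z 0%nat + z 1%nat * z 1%nat + z 2%nat * z 2%nat + z 3%nat * z 3%nat
  + z 4%nat * z 4%nat + z 5%nat * z 5%nat + z 6%nat * z 6%nat.

Lemma is_derive_eqv (f : R -> R) x a b : is_derive f x a -> a = b -> is_derive f x b.
Proof. intros H ->. exact H. Qed.

Lemma prod_bound (z d B : R) : Rabs d <= B -> - (Rabs z * B) <= z * d <= Rabs z * B.
Proof.
  intros H. apply Rabs_le_between. rewrite Rabs_mult.
  apply Rmult_le_compat_l; auto. apply Rabs_pos.
Qed.

Lemma cs7 (a0 a1 a2 a3 a4 a5 a6 : R) :
  (a0 + a1 + a2 + a3 + a4 + a5 + a6) * (a0 + a1 + a2 + a3 + a4 + a5 + a6)
  <= 7 * (a0*a0 + a1*a1 + a2*a2 + a3*a3 + a4*a4 + a5*a5 + a6*a6).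
Proof.
  assert (forall x y : R, 0 <= (x - y) * (x - y)) as Hs by (intros x y; apply Rle_0_sqr).
  pose proof (Hs a0 a1). pose proof (Hs a0 a2). pose proof (Hs a0 a3). pose proof (Hs a0 a4).
  pose proof (Hs a0 a5). pose proof (Hs a0 a6). pose proof (Hs a1 a2). pose proof (Hs a1 a3).
  pose proof (Hs a1 a4). pose proof (Hs a1 a5). pose proof (Hs a1 a6). pose proof (Hs a2 a3).
  pose proof (Hs a2 a4). pose proof (Hs a2 a5). pose proof (Hs a2 a6). pose proof (Hs a3 a4).
  pose proof (Hs a3 a5). pose proof (Hs a3 a6). pose proof (Hs a4 a5). pose proof (Hs a4 a6).
  pose proof (Hs a5 a6).
  assert (E : 7 * (a0*a0 + a1*a1 + a2*a2 + a3*a3 + a4*a4 + a5*a5 + a6*a6) -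
    (a0 + a1 + a2 + a3 + a4 + a5 + a6) * (a0 + a1 + a2 + a3 + a4 + a5 + a6) =
    (a0-a1)*(a0-a1) + (a0-a2)*(a0-a2) + (a0-a3)*(a0-a3) + (a0-a4)*(a0-a4) + (a0-a5)*(a0-a5) + (a0-a6)*(a0-a6)
    + (a1-a2)*(a1-a2) + (a1-a3)*(a1-a3) + (a1-a4)*(a1-a4) + (a1-a5)*(a1-a5) + (a1-a6)*(a1-a6)
    + (a2-a3)*(a2-a3) + (a2-a4)*(a2-a4) + (a2-a5)*(a2-a5) + (a2-a6)*(a2-a6)
    + (a3-a4)*(a3-a4) + (a3-a5)*(a3-a5) + (a3-a6)*(a3-a6)
    + (a4-a5)*(a4-a5) + (a4-a6)*(a4-a6) + (a5-a6)*(a5-a6)) by ring.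
  lra.
Qed.

Lemma abs_sq (x : R) : Rabs x * Rabs x = x * x.
Proof. rewrite <- Rabs_mult. apply Rabs_right. nra. Qed.

Lemma local_step (Z Zd : nat -> R -> R) (K t : R) : 0 <= K ->
  (forall i, (i < 7)%nat -> is_derive (Z i) t (Zd i t) /\ Rabs (Zd i t) <= K * S7 (fun j => Z j t)) ->
  is_derive (fun s => Q7 (fun j => Z j s)) t
    (2 * (Z 0%nat t * Zd 0%nat t + Z 1%nat t * Zd 1%nat t + Z 2%nat t * Zd 2%nat t + Z 3%nat t * Zd 3%nat t
      + Z 4%nat t * Zd 4%nat t + Z 5%nat t * Zd 5%nat t + Z 6%nat t * Zd 6%nat t))
  /\ Rabs (2 * (Z 0%nat t * Zd 0%nat t + Z 1%nat t * Zd 1%nat t + Z 2%nat t * Zd 2%nat t + Z 3%nat t * Zd 3%nat t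
      + Z 4%nat t * Zd 4%nat t + Z 5%nat t * Zd 5%nat t + Z 6%nat t * Zd 6%nat t))
     <= 14 * K * Q7 (fun j => Z j t).
Proof.
  intros HK H.
  destruct (H 0%nat ltac:(lia)) as [D0 B0]. destruct (H 1%nat ltac:(lia)) as [D1 B1].
  destruct (H 2%nat ltac:(lia)) as [D2 B2]. destruct (H 3%nat ltac:(lia)) as [D3 B3].
  destruct (H 4%nat ltac:(lia)) as [D4 B4]. destruct (H 5%nat ltac:(lia)) as [D5 B5].
  destruct (H 6%nat ltac:(lia)) as [D6 B6].
  split.
  - unfold Q7. eapply is_derive_eqv.
    + do 6 (apply der_plus_R; [|apply der_mult_R; eassumption]); apply der_mult_R; eassumption.
    + simpl. ring.
  - set (S := S7 (fun j => Z j t)) in *.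
    apply prod_bound with (z := Z 0%nat t) in B0. apply prod_bound with (z := Z 1%nat t) in B1.
    apply prod_bound with (z := Z 2%nat t) in B2. apply prod_bound with (z := Z 3%nat t) in B3.
    apply prod_bound with (z := Z 4%nat t) in B4. apply prod_bound with (z := Z 5%nat t) in B5.
    apply prod_bound with (z := Z 6%nat t) in B6.
    assert (HS : S * S <= 7 * Q7 (fun j => Z j t)).
    { unfold S, S7, Q7. rewrite <- (abs_sq (Z 0%nat t)), <- (abs_sq (Z 1%nat t)), <- (abs_sq (Z 2%nat t)),
        <- (abs_sq (Z 3%nat t)), <- (abs_sq (Z 4%nat t)), <- (abs_sq (Z 5%nat t)), <- (abs_sq (Z 6%nat t)).
      apply cs7. }
    assert (HKS : K * (S * S) <= K * (7 * Q7 (fun j => Z j t))) by (apply Rmult_le_compat_l; auto).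
    assert (HSdef : S = Rabs (Z 0%nat t) + Rabs (Z 1%nat t) + Rabs (Z 2%nat t) + Rabs (Z 3%nat t)
      + Rabs (Z 4%nat t) + Rabs (Z 5%nat t) + Rabs (Z 6%nat t)) by reflexivity.
    assert (E1 : (Rabs (Z 0%nat t) + Rabs (Z 1%nat t) + Rabs (Z 2%nat t) + Rabs (Z 3%nat t)
      + Rabs (Z 4%nat t) + Rabs (Z 5%nat t) + Rabs (Z 6%nat t)) * (K * S) = K * (S * S))
      by (rewrite <- HSdef; ring).
    assert (E2 : Rabs (Z 0%nat t) * (K * S) + Rabs (Z 1%nat t) * (K * S) + Rabs (Z 2%nat t) * (K * S)
      + Rabs (Z 3%nat t) * (K * S) + Rabs (Z 4%nat t) * (K * S) + Rabs (Z 5%nat t) * (K * S)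
      + Rabs (Z 6%nat t) * (K * S) = K * (S * S)) by (rewrite <- E1; ring).
    clearbody S. clear HSdef E1.
    apply Rabs_le_between. lra.
Qed.

Lemma local_zero (Z Zd : nat -> R -> R) (K a b : R) : 0 <= K ->
  (forall t, a <= t <= b -> forall i, (i < 7)%nat ->
     is_derive (Z i) t (Zd i t) /\ Rabs (Zd i t) <= K * S7 (fun j => Z j t)) ->
  forall u v, a <= u <= b -> a <= v <= b -> (forall i, (i < 7)%nat -> Z i u = 0) ->
  forall i, (i < 7)%nat -> Z i v = 0.
Proof.
  intros HK H u v Hu Hv Z0.
  set (f := fun s => Q7 (fun j => Z j s)).
  set (df := fun t => 2 * (Z 0%nat t * Zd 0%nat t + Z 1%nat t * Zd 1%nat t + Z 2%nat t * Zd 2%nat t + Z 3%nat t * Zd 3%nat t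
      + Z 4%nat t * Zd 4%nat t + Z 5%nat t * Zd 5%nat t + Z 6%nat t * Zd 6%nat t)).
  assert (Hf : forall x, a <= x <= b -> is_derive f x (df x) /\ Rabs (df x) <= 14 * K * f x).
  { intros x Hx. apply (local_step Z Zd K x HK). apply H; auto. }
  assert (Hfu : f u = 0).
  { unfold f, Q7. rewrite !Z0 by lia. ring. }
  assert (Hfv0 : 0 <= f v).
  { unfold f, Q7. pose proof (Rle_0_sqr (Z 0%nat v)). pose proof (Rle_0_sqr (Z 1%nat v)).
    pose proof (Rle_0_sqr (Z 2%nat v)). pose proof (Rle_0_sqr (Z 3%nat v)). pose proof (Rle_0_sqr (Z 4%nat v)).
    pose proof (Rle_0_sqr (Z 5%nat v)). pose proof (Rle_0_sqr (Z 6%nat v)). unfold Rsqr in *. lra. }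
  assert (Hfv : f v = 0).
  { destruct (Rle_dec u v) as [Huv|Huv].
    - apply (gron_fwd f df (14 * K) u v Huv); auto.
      intros x Hx. destruct (Hf x ltac:(lra)) as [D B]. split; auto.
      apply Rabs_le_between in B. lra.
    - apply (gron_bwd f df (14 * K) u v ltac:(lra)); auto.
      intros x Hx. destruct (Hf x ltac:(lra)) as [D B]. split; auto.
      apply Rabs_le_between in B. lra. }
  unfold f, Q7 in Hfv.
  pose proof (Rle_0_sqr (Z 0%nat v)). pose proof (Rle_0_sqr (Z 1%nat v)).
  pose proof (Rle_0_sqr (Z 2%nat v)). pose proof (Rle_0_sqr (Z 3%nat v)). pose proof (Rle_0_sqr (Z 4%nat v)).
  pose proof (Rle_0_sqr (Z 5%nat v)). pose proof (Rle_0_sqr (Z 6%nat v)). unfold Rsqr in *.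
  intros i Hi.
  assert (Hsq : Z i v * Z i v = 0).
  { destruct i as [|[|[|[|[|[|[|i]]]]]]]; try lra. lia. }
  apply Rmult_integral in Hsq. destruct Hsq; auto.
Qed.

Lemma propagate_fwd (P : R -> Prop) :
  (forall s, exists d, 0 < d /\ forall u, Rabs (u - s) < d -> P u -> forall v, Rabs (v - s) < d -> P v) ->
  forall t0 t, t0 <= t -> P t0 -> P t.
Proof.
  intros HL t0 t Ht Pt0.
  set (E := fun w => t0 <= w <= t /\ forall v, t0 <= v <= w -> P v).
  assert (HE0 : E t0).
  { split. lra. intros v Hv. replace v with t0 by lra. exact Pt0. }
  destruct (completeness E) as [T [HT1 HT2]].
  { exists t. intros w Hw. apply Hw. }
  { exists t0. exact HE0. }
  assert (Tt0 : t0 <= T) by (apply HT1; exact HE0).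
  assert (Tt : T <= t) by (apply HT2; intros w Hw; apply Hw).
  destruct (HL T) as [d [Hd Hloc]].
  assert (Hw : exists w, E w /\ T - d < w).
  { apply Classical_Prop.NNPP. intros Hn.
    assert (T <= T - d). { apply HT2. intros w Hw. apply Rnot_lt_le. intros Hlt. apply Hn. exists w. auto. }
    lra. }
  destruct Hw as [w [Ew Hwd]].
  assert (wT : w <= T) by (apply HT1; exact Ew).
  assert (Pw : P w) by (apply (proj2 Ew); destruct Ew as [[? ?] _]; lra).
  assert (Hball : forall v, Rabs (v - T) < d -> P v).
  { apply (Hloc w); auto. apply Rabs_def1; lra. }
  assert (Ew' : E (Rmin t (T + d / 2))).
  { split.
    - split. apply Rmin_glb; lra. apply Rmin_l.
    - intros v Hv. destruct (Rle_dec v w) as [Hvw|Hvw].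
      + apply (proj2 Ew). lra.
      + apply Hball. pose proof (Rmin_r t (T + d / 2)). apply Rabs_def1; lra. }
  pose proof (HT1 _ Ew') as Hle.
  unfold Rmin in Ew', Hle. destruct (Rle_dec t (T + d / 2)).
  - apply (proj2 Ew'). lra.
  - lra.
Qed.

Lemma propagate (P : R -> Prop) :
  (forall s, exists d, 0 < d /\ forall u, Rabs (u - s) < d -> P u -> forall v, Rabs (v - s) < d -> P v) ->
  forall t0, P t0 -> forall t, P t.
Proof.
  intros HL t0 Pt0 t. destruct (Rle_dec t0 t).
  - apply (propagate_fwd P HL t0); auto.
  - assert (HL' : forall s, exists d, 0 < d /\ forall u, Rabs (u - s) < d -> P (- u) -> forall v, Rabs (v - s) < d -> P (- v)).
    { intros s. destruct (HL (- s)) as [d [Hd Hl]]. exists d. split; auto.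
      intros u Hu Pu v Hv. apply (Hl (- u)); auto.
      * replace (- u - - s) with (- (u - s)) by ring. rewrite Rabs_Ropp. auto.
      * replace (- v - - s) with (- (v - s)) by ring. rewrite Rabs_Ropp. auto. }
    pose proof (propagate_fwd (fun u => P (- u)) HL' (- t0) (- t) ltac:(lra)) as HH.
    simpl in HH. rewrite !Ropp_involutive in HH. auto.
Qed.

Definition DEP (n : nat) := forall w : nat -> nat -> R, exists c : nat -> R,
  (exists k, (k <= n)%nat /\ c k <> 0) /\
  forall j, (j < n)%nat -> sum_f_R0 (fun k => c k * w k j) n = 0.

Lemma sum_ind (N k0 : nat) (a : R) (f : nat -> R) : (k0 <= N)%nat ->
  sum_f_R0 (fun k => (if Nat.eqb k k0 then a else 0) * f k) N = a * f k0.
Proof.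
  induction N as [|N IH]; intros Hk.
  - simpl. assert (k0 = 0%nat) by lia. subst. simpl. ring.
  - rewrite tech5. destruct (Nat.eq_dec k0 (S N)) as [->|Hne].
    + rewrite Nat.eqb_refl.
      rewrite (sum_eq _ (fun _ => 0)).
      * rewrite sum_cte. ring.
      * intros i Hi. destruct (Nat.eqb_spec i (S N)); [lia|ring].
    + rewrite IH by lia. destruct (Nat.eqb_spec (S N) k0); [lia|ring].
Qed.

Lemma caseA n : DEP n -> forall w : nat -> nat -> R, w (S n) n <> 0 ->
  exists c : nat -> R, (exists k, (k <= S n)%nat /\ c k <> 0) /\
  forall j, (j < S n)%nat -> sum_f_R0 (fun k => c k * w k j) (S n) = 0.
Proof.
  intros IH w Hp.
  set (p := w (S n) n) in *.
  destruct (IH (fun k j => w k j - (w k n / p) * w (S n) j)) as [c' [[k [Hk Hc]] Hs]].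
  exists (fun k => if Nat.eqb k (S n) then - (sum_f_R0 (fun k => c' k * w k n) n) / p else c' k).
  split.
  - exists k. split. lia. destruct (Nat.eqb_spec k (S n)); [lia|auto].
  - intros j Hj.
    assert (Hu : sum_f_R0 (fun k => c' k * (w k j - w k n / p * w (S n) j)) n = 0).
    { destruct (Nat.eq_dec j n) as [->|Hne].
      - rewrite (sum_eq _ (fun _ => 0)). rewrite sum_cte. ring.
        intros i Hi. unfold p. field. exact Hp.
      - apply Hs. lia. }
    rewrite tech5. rewrite Nat.eqb_refl.
    rewrite (sum_eq _ (fun k => c' k * w k j)).
    2:{ intros i Hi. destruct (Nat.eqb_spec i (S n)); [lia|auto]. }
    rewrite (sum_eq _ (fun k => c' k * w k j - (c' k * w k n) * (w (S n) j / p))) in Hu.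
    2:{ intros i Hi. unfold p. field. exact Hp. }
    rewrite minus_sum, <- scal_sum in Hu.
    assert (E : - sum_f_R0 (fun k0 => c' k0 * w k0 n) n / p * w (S n) j
                = - (w (S n) j / p * sum_f_R0 (fun k0 => c' k0 * w k0 n) n)) by (unfold p; field; exact Hp).
    rewrite E. lra.
Qed.

Lemma dep n : DEP n.
Proof.
  induction n as [|n IH].
  - intros w. exists (fun _ => 1). split.
    + exists 0%nat. split; auto; lra.
    + intros j Hj. lia.
  - intros w. destruct (Req_dec (w (S n) n) 0) as [H0|Hp].
    + destruct (classic (exists k0, (k0 <= n)%nat /\ w k0 n <> 0)) as [[k0 [Hk0 Hw0]]|Hall].
      * set (w' := fun k j => if Nat.eqb k (S n) then w (S n) j + w k0 j else w k j).
        destruct (caseA n IH w') as [c' [[kk [Hkk Hc']] Hs]].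
        { unfold w'. rewrite Nat.eqb_refl. rewrite H0. rewrite Rplus_0_l. exact Hw0. }
        exists (fun k => c' k + (if Nat.eqb k k0 then c' (S n) else 0)). split.
        -- apply NNPP. intros Hn.
           assert (A : forall k, (k <= S n)%nat -> c' k + (if Nat.eqb k k0 then c' (S n) else 0) = 0).
           { intros k Hk. apply NNPP. intros Hne. apply Hn. exists k. auto. }
           pose proof (A (S n) ltac:(lia)) as ASn.
           destruct (Nat.eqb_spec (S n) k0); [lia|].
           rewrite Rplus_0_r in ASn.
           pose proof (A kk Hkk) as Akk. rewrite ASn in Akk.
           destruct (Nat.eqb kk k0); lra.
        -- intros j Hj. pose proof (Hs j Hj) as Hj'.
           rewrite (sum_eq _ (fun k => c' k * w k j + (if Nat.eqb k k0 then c' (S n) else 0) * w k j)).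
           2:{ intros; ring. }
           rewrite sum_plus, sum_ind by lia.
           rewrite tech5 in Hj' |- *. unfold w' in Hj'. rewrite Nat.eqb_refl in Hj'.
           rewrite (sum_eq (fun k => c' k * (if Nat.eqb k (S n) then w (S n) j + w k0 j else w k j))
                   (fun k => c' k * w k j)) in Hj'.
           2:{ intros i Hi. destruct (Nat.eqb_spec i (S n)); [lia|auto]. }
           lra.
      * destruct (IH w) as [c' [[kk [Hkk Hc']] Hs]].
        exists (fun k => if Nat.eqb k (S n) then 0 else c' k). split.
        -- exists kk. split. lia. destruct (Nat.eqb_spec kk (S n)); [lia|auto].
        -- intros j Hj. rewrite tech5. rewrite Nat.eqb_refl.
           rewrite (sum_eq _ (fun k => c' k * w k j)).
           2:{ intros i Hi. destruct (Nat.eqb_spec i (S n)); [lia|auto]. }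
           destruct (Nat.eq_dec j n) as [->|Hne].
           ++ rewrite (sum_eq _ (fun _ => 0)). rewrite sum_cte. ring.
              intros i Hi. destruct (Req_dec (w i n) 0) as [->|Hz]. ring.
              exfalso. apply Hall. exists i. auto.
           ++ rewrite Hs by lia. ring.
    + apply caseA; auto.
Qed.

Lemma cont_bound (f : R -> R) s : continuous f s ->
  exists d, 0 < d /\ forall t, Rabs (t - s) < d -> Rabs (f t) <= Rabs (f s) + 1.
Proof.
  intros Hc. apply continuity_pt_filterlim in Hc.
  destruct (proj1 (continuity_pt_locally f s) Hc (mkposreal 1 Rlt_0_1)) as [d Hd].
  exists d. split. apply cond_pos. intros t Ht.
  assert (H1 : Rabs (f t - f s) < 1) by (apply Hd; exact Ht).
  pose proof (Rabs_triang (f t - f s) (f s)). replace (f t - f s + f s) with (f t) in H by ring.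
  lra.
Qed.

Lemma fin_bound N (g : nat -> R -> R) s : (forall n, (n < N)%nat -> continuous (g n) s) ->
  exists d G, 0 < d /\ 0 <= G /\ forall t, Rabs (t - s) < d -> forall n, (n < N)%nat -> Rabs (g n t) <= G.
Proof.
  induction N as [|N IH]; intros Hc.
  - exists 1, 0. split. lra. split. lra. intros. lia.
  - destruct IH as [d1 [G1 [Hd1 [HG1 H1]]]]. { intros n Hn. apply Hc. lia. }
    destruct (cont_bound (g N) s (Hc N ltac:(lia))) as [d2 [Hd2 H2]].
    exists (Rmin d1 d2), (Rmax G1 (Rabs (g N s) + 1)). split.
    + apply Rmin_pos; auto.
    + split. { apply Rle_trans with G1; auto. apply Rmax_l. }
      intros t Ht n Hn.
      assert (Ht1 : Rabs (t - s) < d1) by (pose proof (Rmin_l d1 d2); lra).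
      assert (Ht2 : Rabs (t - s) < d2) by (pose proof (Rmin_r d1 d2); lra).
      destruct (Nat.eq_dec n N) as [->|Hne].
      * apply Rle_trans with (Rabs (g N s) + 1). apply H2; auto. apply Rmax_r.
      * apply Rle_trans with G1. apply H1; auto; lia. apply Rmax_l.
Qed.

Lemma cont_t (F : R -> R -> R) w t x : smooth2 F -> continuous (fun s => pd w F s x) t.
Proof.
  intros H. destruct (H w t x) as [_ [_ Hc]].
  apply (continuous_comp_2 (fun s => s) (fun _ => x) (pd w F)).
  - apply continuous_id.
  - apply continuous_const.
  - exact Hc.
Qed.

Definition gc V (m : nat) (t : R) : R :=
  match m with 0 => aR V 1 t | 1 => atR V 1 t | 2 => axR V 1 t | 3 => aR V (-1) t
  | 4 => atR V (-1) t | 5 => axR V (-1) t | 6 => aR V 0 t | 7 => atR V 0 t | 8 => axR V 0 t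
  | 9 => bI V 0 t | 10 => btI V 0 t | 11 => bxI V 0 t | _ => 0 end.

Lemma gc_cont V m s : smooth2C V -> (m < 12)%nat -> continuous (gc V m) s.
Proof.
  intros [HR HI] Hm.
  destruct m as [|[|[|[|[|[|[|[|[|[|[|[|m]]]]]]]]]]]].
  - exact (cont_t _ nil s 1 HR).
  - exact (cont_t _ (cons true nil) s 1 HR).
  - exact (cont_t _ (cons false nil) s 1 HR).
  - exact (cont_t _ nil s (-1) HR).
  - exact (cont_t _ (cons true nil) s (-1) HR).
  - exact (cont_t _ (cons false nil) s (-1) HR).
  - exact (cont_t _ nil s 0 HR).
  - exact (cont_t _ (cons true nil) s 0 HR).
  - exact (cont_t _ (cons false nil) s 0 HR).
  - exact (cont_t _ nil s 0 HI).
  - exact (cont_t _ (cons true nil) s 0 HI).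
  - exact (cont_t _ (cons false nil) s 0 HI).
  - lia.
Qed.

Lemma lc7 (y : nat -> R) K e c0 c1 c2 c3 c4 c5 c6 :
  e = c0 * y 0%nat + c1 * y 1%nat + c2 * y 2%nat + c3 * y 3%nat + c4 * y 4%nat + c5 * y 5%nat + c6 * y 6%nat ->
  Rabs c0 <= K -> Rabs c1 <= K -> Rabs c2 <= K -> Rabs c3 <= K -> Rabs c4 <= K -> Rabs c5 <= K -> Rabs c6 <= K ->
  Rabs e <= K * S7 y.
Proof.
  intros -> H0 H1 H2 H3 H4 H5 H6.
  apply (prod_bound (y 0%nat)) in H0. apply (prod_bound (y 1%nat)) in H1.
  apply (prod_bound (y 2%nat)) in H2. apply (prod_bound (y 3%nat)) in H3.
  apply (prod_bound (y 4%nat)) in H4. apply (prod_bound (y 5%nat)) in H5.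
  apply (prod_bound (y 6%nat)) in H6.
  unfold S7. apply Rabs_le_between.
  rewrite (Rmult_comm (y 0%nat)) in H0. rewrite (Rmult_comm (y 1%nat)) in H1.
  rewrite (Rmult_comm (y 2%nat)) in H2. rewrite (Rmult_comm (y 3%nat)) in H3.
  rewrite (Rmult_comm (y 4%nat)) in H4. rewrite (Rmult_comm (y 5%nat)) in H5.
  rewrite (Rmult_comm (y 6%nat)) in H6.
  assert (E : K * (Rabs (y 0%nat) + Rabs (y 1%nat) + Rabs (y 2%nat) + Rabs (y 3%nat) + Rabs (y 4%nat)
    + Rabs (y 5%nat) + Rabs (y 6%nat)) = Rabs (y 0%nat) * K + Rabs (y 1%nat) * K + Rabs (y 2%nat) * K
    + Rabs (y 3%nat) * K + Rabs (y 4%nat) * K + Rabs (y 5%nat) * K + Rabs (y 6%nat) * K) by ring.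
  rewrite E. lra.
Qed.

Lemma Fv_bound V G t (y : nat -> R) i : 0 <= G ->
  (forall m, (m < 12)%nat -> Rabs (gc V m t) <= G) -> (i < 7)%nat ->
  Rabs (Fv V i t y) <= (20 * G + 1) * S7 y.
Proof.
  intros HG Hb Hi.
  pose proof (proj1 (Rabs_le_between _ _) (Hb 0%nat ltac:(lia))) as g0.
  pose proof (proj1 (Rabs_le_between _ _) (Hb 1%nat ltac:(lia))) as g1.
  pose proof (proj1 (Rabs_le_between _ _) (Hb 2%nat ltac:(lia))) as g2.
  pose proof (proj1 (Rabs_le_between _ _) (Hb 3%nat ltac:(lia))) as g3.
  pose proof (proj1 (Rabs_le_between _ _) (Hb 4%nat ltac:(lia))) as g4.
  pose proof (proj1 (Rabs_le_between _ _) (Hb 5%nat ltac:(lia))) as g5.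
  pose proof (proj1 (Rabs_le_between _ _) (Hb 6%nat ltac:(lia))) as g6.
  pose proof (proj1 (Rabs_le_between _ _) (Hb 7%nat ltac:(lia))) as g7.
  pose proof (proj1 (Rabs_le_between _ _) (Hb 8%nat ltac:(lia))) as g8.
  pose proof (proj1 (Rabs_le_between _ _) (Hb 9%nat ltac:(lia))) as g9.
  pose proof (proj1 (Rabs_le_between _ _) (Hb 10%nat ltac:(lia))) as g10.
  pose proof (proj1 (Rabs_le_between _ _) (Hb 11%nat ltac:(lia))) as g11.
  simpl in g0, g1, g2, g3, g4, g5, g6, g7, g8, g9, g10, g11.
  destruct i as [|[|[|[|[|[|[|i]]]]]]]; cbn [Fv]; try unfold Rx.
  - apply (lc7 y _ _ 0 1 0 0 0 0 0); try ring; apply Rabs_le_between; lra.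
  - apply (lc7 y _ _ 0 0 1 0 0 0 0); try ring; apply Rabs_le_between; lra.
  - apply (lc7 y _ _ (4 * (atR V 1 t + atR V (-1) t - 2 * atR V 0 t))
      (4 * (aR V 1 t + / 2 * axR V 1 t + aR V (-1) t - / 2 * axR V (-1) t - 2 * aR V 0 t)) 0
      (4 * (axR V 1 t + axR V (-1) t - 2 * axR V 0 t)) 0 0 0); try ring; apply Rabs_le_between; lra.
  - apply (lc7 y _ _ 0 0 0 0 1 0 0); try ring; apply Rabs_le_between; lra.
  - apply (lc7 y _ _ (atR V 1 t - atR V (-1) t)
      (aR V 1 t + / 2 * axR V 1 t - aR V (-1) t + / 2 * axR V (-1) t) 0
      (axR V 1 t - axR V (-1) t) 0 0 0); try ring; apply Rabs_le_between; lra.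
  - apply (lc7 y _ _ (atR V 0 t) (aR V 0 t) 0 (axR V 0 t) 0 0 0); try ring; apply Rabs_le_between; lra.
  - apply (lc7 y _ _ (- btI V 0 t) (- bI V 0 t) (- / 4) (- bxI V 0 t) 0 0 0); try ring; apply Rabs_le_between; lra.
  - lia.
Qed.

Lemma sum_derive (Y : nat -> R -> R) (D : nat -> R) (c : nat -> R) n t :
  (forall k, (k <= n)%nat -> is_derive (Y k) t (D k)) ->
  is_derive (fun s => sum_f_R0 (fun k => c k * Y k s) n) t (sum_f_R0 (fun k => c k * D k) n).
Proof.
  induction n as [|n IH]; intros H.
  - simpl. apply is_derive_scal. apply H. lia.
  - simpl. apply (der_plus_R (fun s => sum_f_R0 (fun k => c k * Y k s) n) (fun s => c (S n) * Y (S n) s)).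
    + apply IH. intros k Hk. apply H. lia.
    + apply is_derive_scal. apply H. lia.
Qed.

Lemma Fv_lin V i t (u w : nat -> R) a :
  Fv V i t (fun j => u j + a * w j) = Fv V i t u + a * Fv V i t w.
Proof. destruct i as [|[|[|[|[|[|[|i]]]]]]]; cbn [Fv]; try unfold Rx; ring. Qed.

Lemma Fv_scal V i t (w : nat -> R) a :
  Fv V i t (fun j => a * w j) = a * Fv V i t w.
Proof. destruct i as [|[|[|[|[|[|[|i]]]]]]]; cbn [Fv]; try unfold Rx; ring. Qed.

Lemma Fv_sum V i t (y : nat -> nat -> R) (c : nat -> R) n :
  Fv V i t (fun j => sum_f_R0 (fun k => c k * y k j) n) = sum_f_R0 (fun k => c k * Fv V i t (y k)) n.
Proof.
  induction n as [|n IH].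
  - simpl. apply Fv_scal.
  - simpl. rewrite <- IH.
    apply (Fv_lin V i t (fun j => sum_f_R0 (fun k => c k * y k j) n) (y (S n)) (c (S n))).
Qed.

Theorem lemma1 (V : R -> R -> Complex.C) (HV : smooth2C V)
  (tau chi sigma rho : nat -> R -> R)
  (Hess : forall k : nat, (k < 8)%nat -> in_gess V (tau k) (chi k) (sigma k) (rho k)) :
  exists c : nat -> R,
    (exists k : nat, (k < 8)%nat /\ c k <> 0%R) /\
    lincomb_zero 8 c (fun k => essVF (tau k) (chi k) (sigma k) (rho k)).
Proof.
  set (Y := fun k i => Yf (tau k) (chi k) (sigma k) (rho k) i).
  destruct (dep 7 (fun k j => Y k j 0)) as [c [[k0 [Hk0 Hc0]] Hs0]].
  exists c. split.
  { exists k0. split. lia. exact Hc0. }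
  set (Z := fun j t => sum_f_R0 (fun k => c k * Y k j t) 7).
  assert (HD : forall t j, (j < 7)%nat -> is_derive (Z j) t (Fv V j t (fun i => Z i t))).
  { intros t j Hj. unfold Z. rewrite Fv_sum.
    apply (sum_derive (fun k => Y k j) (fun k => Fv V j t (fun i => Y k i t))).
    intros k Hk. apply ode_elem; auto. apply Hess. lia. }
  assert (HZ : forall t, forall j, (j < 7)%nat -> Z j t = 0).
  { apply (propagate (fun t => forall j, (j < 7)%nat -> Z j t = 0)) with (t0 := 0).
    - intros s. destruct (fin_bound 12 (gc V) s) as [d [G [Hd [HG Hb]]]].
      { intros m Hm. apply gc_cont; auto. }
      exists (d / 2). split. lra.
      intros u Hu Pu v Hv.
      apply (local_zero Z (fun j t => Fv V j t (fun i => Z i t)) (20 * G + 1) (s - d / 2) (s + d / 2))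
        with (u := u); auto.
      + lra.
      + intros t Ht i Hi. split. apply HD; auto.
        apply Fv_bound; auto. intros m Hm. apply Hb; auto.
        apply Rabs_def1; lra.
      + apply Rabs_def2 in Hu. lra.
      + apply Rabs_def2 in Hv. lra.
    - intros j Hj. apply Hs0. exact Hj. }
  intros t x.
  pose proof (HZ t 0%nat ltac:(lia)) as Z0. pose proof (HZ t 1%nat ltac:(lia)) as Z1.
  pose proof (HZ t 2%nat ltac:(lia)) as Z2. pose proof (HZ t 3%nat ltac:(lia)) as Z3.
  pose proof (HZ t 4%nat ltac:(lia)) as Z4. pose proof (HZ t 5%nat ltac:(lia)) as Z5.
  pose proof (HZ t 6%nat ltac:(lia)) as Z6.
  unfold Z, Y, Yf in Z0, Z1, Z2, Z3, Z4, Z5, Z6. simpl in Z0, Z1, Z2, Z3, Z4, Z5, Z6.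
  simpl. repeat split.
  - lra.
  - apply (f_equal (Rmult (/ 2 * x))) in Z1. rewrite Rmult_0_r in Z1. lra.
  - lra.
  - apply (f_equal (Rmult (/ 8 * (x * (x * 1))))) in Z2. rewrite Rmult_0_r in Z2.
    apply (f_equal (Rmult (/ 2 * x))) in Z4. rewrite Rmult_0_r in Z4. lra.
  - lra.
  - apply (f_equal (Rmult (/ 8 * (x * (x * 1))))) in Z2. rewrite Rmult_0_r in Z2.
    apply (f_equal (Rmult (/ 2 * x))) in Z4. rewrite Rmult_0_r in Z4. lra.
Qed.
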